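(* Let $c^1,\dots,c^n$ be a lattice basis of $\mathbb{Z}^n$, $K=\{x\in\mathbb{R}^n: c^ix\ge0,\ i=1,\dots,n\}$, and $\bar x\in K\cap\mathbb{Z}^n\setminus\{0\}$. Then $$Q(\bar x)=\Big\{x\in\mathbb{R}^n:\ c^ix\ge0\ (i=1,\dots,n),\ \ \sum_{i=1}^k d^k_i c^ix\ge\sum_{i=1}^k d^k_i c^i\bar x\ (k=1,\dots,n)\Big\}.$$
   Context: A lattice basis of $\mathbb{Z}^n$ is a set of $n$ linearly independent vectors $c^1,\dots,c^n\in\mathbb{Z}^n$ such that every $v\in\mathbb{Z}^n$ equals $\sum_i\lambda_ic^i$ with all $\lambda_i\in\mathbb{Z}$. Lexicographic order: $x\prec y$ iff $x\ne y$ and $c^ix<c^iy$ for the smallest index $i$ with $c^ix\ne c^iy$. $Q(\bar x):=\operatorname{conv}\{x\in K\cap\mathbb{Z}^n: x\succeq\bar x\}$. For $k\in\{1,\dots,n\}$, $i\in\{1,\dots,k\}$: $d^k_k=1$; $d^k_{k-1}=c^k\bar x$ (if $k\ge2$); $d^k_i=c^k\bar x\prod_{j=i+1}^{k-1}(c^j\bar x+1)$ for $i\le k-2$. The inequality $\sum_{i=1}^k d^k_ic^ix\ge\sum_{i=1}^k d^k_ic^i\bar x$ is the $k$-th lex-cut associated with $\bar x$. *)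

(* Defs.v *)
From mathcomp Require Import all_boot all_order all_algebra.
From mathcomp Require Import reals.
Set Implicit Arguments. Unset Strict Implicit. Unset Printing Implicit Defensive.
Import Order.TTheory GRing.Theory Num.Theory.
Local Open Scope ring_scope.

(* c i j = j-th coordinate of the integer vector c^{i+1} (0-based indices). *)

Definition lattice_basis (R : realType) (n : nat) (c : 'I_n -> 'I_n -> int) : Prop :=
  (forall lam : 'I_n -> R,
      (forall j : 'I_n, \sum_(i < n) lam i * (c i j)%:~R = 0) ->
      forall i, lam i = 0) /\
  (forall v : 'I_n -> int, exists lam : 'I_n -> int,
      forall j : 'I_n, v j = \sum_(i < n) lam i * c i j).

Definition cdot (R : realType) (n : nat) (c : 'I_n -> 'I_n -> int)
  (x : 'I_n -> R) (i : 'I_n) : R :=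
  \sum_(j < n) (c i j)%:~R * x j.

Definition intvec (R : realType) (n : nat) (z : 'I_n -> int) : 'I_n -> R :=
  fun j => (z j)%:~R.

Definition is_int_point (R : realType) (n : nat) (x : 'I_n -> R) : Prop :=
  exists z : 'I_n -> int, forall j, x j = (z j)%:~R.

Definition inK (R : realType) (n : nat) (c : 'I_n -> 'I_n -> int) (x : 'I_n -> R) : Prop :=
  forall i, 0 <= cdot c x i.

Definition lex_lt (R : realType) (n : nat) (c : 'I_n -> 'I_n -> int)
  (x y : 'I_n -> R) : Prop :=
  (exists j, x j <> y j) /\
  exists i : 'I_n, (forall i' : 'I_n, (i' < i)%N -> cdot c x i' = cdot c y i') /\
                   cdot c x i < cdot c y i.

Definition lex_ge (R : realType) (n : nat) (c : 'I_n -> 'I_n -> int)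
  (x y : 'I_n -> R) : Prop :=
  (forall j, x j = y j) \/ lex_lt c y x.

Definition conv_hull (R : realType) (n : nat) (S : ('I_n -> R) -> Prop)
  (x : 'I_n -> R) : Prop :=
  exists (m : nat) (w : 'I_m -> R) (p : 'I_m -> 'I_n -> R),
    (forall t, 0 <= w t) /\ \sum_(t < m) w t = 1 /\ (forall t, S (p t)) /\
    forall j, x j = \sum_(t < m) w t * p t j.

Definition Qset (R : realType) (n : nat) (c : 'I_n -> 'I_n -> int)
  (xbar : 'I_n -> R) : ('I_n -> R) -> Prop :=
  conv_hull (fun x => inK c x /\ is_int_point x /\ lex_ge c x xbar).

(* Coefficients d^k_i, with 0-based k, i (paper's k = k+1, i = i+1), i <= k:
   d^k_k = 1; d^k_{k-1} = c^k xbar; d^k_i = c^k xbar * prod_{i<j<k} (c^j xbar + 1). *)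
Definition dcoef (R : realType) (n : nat) (c : 'I_n -> 'I_n -> int)
  (xbar : 'I_n -> R) (k i : 'I_n) : R :=
  if i == k then 1
  else if (i.+1 == k)%N then cdot c xbar k
  else cdot c xbar k * \prod_(j < n | (i < j < k)%N) (cdot c xbar j + 1).

Definition lexcut_lhs (R : realType) (n : nat) (c : 'I_n -> 'I_n -> int)
  (xbar : 'I_n -> R) (k : 'I_n) (x : 'I_n -> R) : R :=
  \sum_(i < n | (i <= k)%N) dcoef c xbar k i * cdot c x i.

(* Main.v *)
Require Import Defs.
From mathcomp Require Import all_boot all_order all_algebra.
From mathcomp Require Import reals zify ring lra.
Import Order.TTheory GRing.Theory Num.Theory.
Local Open Scope ring_scope.

Section Abs.
Variable R : realType.

Definition D (yb : nat -> int) (k i : nat) : R :=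
  if i == k then 1 else (yb k)%:~R * \prod_(i.+1 <= j < k) ((yb j)%:~R + 1).

Definition cut (yb : nat -> int) (k : nat) (y : nat -> R) : R :=
  \sum_(0 <= i < k.+1) D yb k i * y i.

Definition shf {T} (f : nat -> T) : nat -> T := fun i => f i.+1.
Definition ir (z : nat -> int) : nat -> R := fun i => (z i)%:~R.

Lemma D_shift yb k i : D yb k.+1 i.+1 = D (shf yb) k i.
Proof.
rewrite /D eqSS; case: ifP => // _.
by rewrite big_add1 /=.
Qed.

Lemma D_ge0 yb k i : (forall j, 0 <= yb j) -> 0 <= D yb k i.
Proof.
move=> h; rewrite /D; case: ifP => // _.
apply: mulr_ge0; first by rewrite ler0z.
apply: prodr_ge0 => j _; apply: addr_ge0 => //; by rewrite ler0z.
Qed.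

Lemma cut_shift yb k y :
  cut yb k.+1 y = D yb k.+1 0 * y 0%N + cut (shf yb) k (shf y).
Proof.
rewrite /cut big_nat_recl //; congr (_ + _).
by apply: eq_bigr => i _; rewrite D_shift.
Qed.

Lemma D_tele yb k j l : (l + j.+1 = k)%N ->
  D yb k l = \sum_(l.+1 <= i < k.+1) D yb k i * (yb i)%:~R.
Proof.
elim: j l => [|j IH] l hl.
  rewrite addn1 in hl; subst k.
  rewrite big_nat1 /D eqxx mul1r.
  rewrite (ltn_eqF (ltnSn l)) big_geq //.
  by rewrite mulr1.
rewrite big_ltn; last by rewrite -hl; lia.
rewrite -(IH l.+1); last by rewrite -hl; lia.
rewrite /D.
have -> : (l == k) = false by apply/eqP; lia.
have -> : (l.+1 == k) = false by apply/eqP; lia.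
rewrite (@big_ltn _ _ _ l.+1 k); last by lia.
by ring.
Qed.

Lemma D0_cut yb k : D yb k.+1 0 = cut (shf yb) k (shf (ir yb)).
Proof.
rewrite (@D_tele yb k.+1 k 0) // /cut big_add1 /=.
by apply: eq_bigr => i _; rewrite D_shift.
Qed.

Lemma cut0 yb y : cut yb 0 y = y 0%N.
Proof. by rewrite /cut big_nat1 /D eqxx mul1r. Qed.


Lemma cut_ge0 yb k y : (forall j, 0 <= yb j) -> (forall i, (i <= k)%N -> 0 <= y i) ->
  0 <= cut yb k y.
Proof.
move=> hyb hy; rewrite /cut big_nat_cond; apply: sumr_ge0 => i /andP[/andP[_ hi] _].
by apply: mulr_ge0; [apply: D_ge0 | apply: hy].
Qed.

Lemma cut_div yb k y s : cut yb k (fun i => y i / s) = cut yb k y / s.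
Proof. by rewrite /cut mulr_suml; apply: eq_bigr => i _; rewrite mulrA. Qed.

Definition lexge n (z yb : nat -> int) :=
  (forall i, (i < n)%N -> z i = yb i) \/
  exists l, [/\ (l < n)%N, (forall i, (i < l)%N -> z i = yb i) & yb l < z l].

Lemma valid k : forall n yb z, (forall j, 0 <= yb j) -> (k < n)%N ->
  (forall i, (i < n)%N -> 0 <= z i) -> lexge n z yb ->
  cut yb k (ir yb) <= cut yb k (ir z).
Proof.
elim: k => [|k IH] n yb z hyb hk hz hlex.
  rewrite !cut0 /ir ler_int.
  case: hlex => [h|[l [hl hpre hlt]]]; first by rewrite h.
  case: l hl hpre hlt => [|l] hl hpre hlt; first exact: ltW.
  by rewrite hpre.
case: n hk hz hlex => [//|n] hk hz hlex.
rewrite !cut_shift D0_cut.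
set beta := cut _ _ (shf (ir yb)).
have hb0 : 0 <= beta by apply: cut_ge0 => [j|i _]; rewrite /shf /ir ?ler0z; apply: hyb.
have [e0|lt0] : z 0%N = yb 0%N \/ yb 0%N < z 0%N.
  case: hlex => [h|[l [hl hpre hlt]]]; first by left; rewrite h.
  case: l hl hpre hlt => [|l] hl hpre hlt; first by right.
  by left; rewrite hpre.
- rewrite /ir e0; apply: lerD => //.
  apply: (IH n) => //.
  + by move=> j; apply: hyb.
  + by move=> i hi; apply: hz.
  + case: hlex => [h|[l [hl hpre hlt]]]; first by left => i hi; apply: h.
    case: l hl hpre hlt => [|l] hl hpre hlt; first by rewrite e0 ltxx in hlt.
    by right; exists l; split => // i hi; apply: hpre.
- have hz' : 0 <= cut (shf yb) k (shf (ir z)).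
    apply: cut_ge0 => [j|i hi]; rewrite /shf /ir ?ler0z; [exact: hyb | apply: hz; lia].
  have h1 : (yb 0%N)%:~R + 1 <= (z 0%N)%:~R :> R.
    by move: lt0; rewrite -lezD1 -(ler_int R) intrD.
  rewrite /ir.
  have := ler_wpM2l hb0 h1.
  rewrite mulrDr mulr1 => h2.
  apply: (le_trans _ (lerD h2 hz')); lra.
Qed.

Definition convP n (S : (nat -> int) -> Prop) (y : nat -> R) :=
  exists m (w : 'I_m -> R) (p : 'I_m -> nat -> int),
    [/\ (forall t, 0 <= w t), \sum_(t < m) w t = 1, (forall t, S (p t)) &
     forall i, (i < n)%N -> y i = \sum_(t < m) w t * (p t i)%:~R].

Lemma conv_pt n (S : (nat -> int) -> Prop) p y : S p ->
  (forall i, (i < n)%N -> y i = (p i)%:~R) -> convP n S y.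
Proof.
move=> hS hy; exists 1%N, (fun _ => 1), (fun _ => p); split => //.
- by rewrite big_ord1.
- by move=> i hi; rewrite big_ord1 mul1r hy.
Qed.

Lemma conv_mono n (S S' : (nat -> int) -> Prop) y :
  (forall p, S p -> S' p) -> convP n S y -> convP n S' y.
Proof.
move=> hS [m [w [p [h1 h2 h3 h4]]]]; exists m, w, p; split => // t; exact: hS.
Qed.

Lemma split_l m1 m2 (j : 'I_m1) : split (lshift m2 j) = inl j.
Proof. exact: (unsplitK (inl _)). Qed.
Lemma split_r m1 m2 (j : 'I_m2) : split (rshift m1 j) = inr j.
Proof. exact: (unsplitK (inr _)). Qed.

Lemma conv_comb n S a u v y : 0 <= a <= 1 -> convP n S u -> convP n S v ->
  (forall i, (i < n)%N -> y i = a * u i + (1 - a) * v i) -> convP n S y.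
Proof.
move=> /andP[a0 a1] [m1 [w1 [p1 [h11 h12 h13 h14]]]]
  [m2 [w2 [p2 [h21 h22 h23 h24]]]] hy.
exists (m1 + m2)%N,
  (fun t => match split t with inl t1 => a * w1 t1 | inr t2 => (1 - a) * w2 t2 end),
  (fun t => match split t with inl t1 => p1 t1 | inr t2 => p2 t2 end).
split.
- move=> t; case: (split t) => t'; apply: mulr_ge0 => //; lra.
- rewrite big_split_ord /=.
  under eq_bigr do rewrite split_l.
  under [X in _ + X]eq_bigr do rewrite split_r.
  by rewrite -!mulr_sumr h12 h22 !mulr1 addrC subrK.
- by move=> t; case: (split t).
- move=> i hi; rewrite hy // h14 // h24 // big_split_ord /=.
  under [X in _ = X + _]eq_bigr do rewrite split_l.
  under [X in _ = _ + X]eq_bigr do rewrite split_r.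
  rewrite !mulr_sumr; congr (_ + _); apply: eq_bigr => t _; by rewrite mulrA.
Qed.

Lemma conv_cons n S a y y'' : convP n S y ->
  y'' 0%N = a%:~R -> (forall i, (i < n)%N -> y'' i.+1 = y i) ->
  convP n.+1 (fun p => S (shf p) /\ p 0%N = a) y''.
Proof.
move=> [m [w [p [h1 h2 h3 h4]]]] e0 es.
exists m, w, (fun t i => if i is j.+1 then p t j else a); split => //.
  by move=> t; split => //; apply: h3.
move=> [|i] hi; first by rewrite e0 -mulr_suml h2 mul1r.
by rewrite es // h4.
Qed.


Definition Sset n (yb : nat -> int) (p : nat -> int) :=
  (forall i, (i < n)%N -> 0 <= p i) /\ lexge n p yb.

Lemma main_abs n : forall yb (y : nat -> R), (forall j, 0 <= yb j) ->
  (forall i, (i < n)%N -> 0 <= y i) ->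
  (forall k, (k < n)%N -> cut yb k (ir yb) <= cut yb k y) ->
  convP n (Sset n yb) y.
Proof.
elim: n => [|n IH] yb y hyb hy hc.
  apply: (@conv_pt 0 _ yb) => //; split => //; by left.
have c0 := hc 0%N isT; rewrite !cut0 /ir in c0.
set f := Num.floor (y 0%N).
have fl : f%:~R <= y 0%N by apply: floor_le.
have fu : y 0%N < (f + 1)%:~R by apply: floorD1_gt.
have ybf : yb 0%N <= f by rewrite floor_ge_int.
have [ltf|gef] := ltP (yb 0%N) f.
- have IH0 : convP n (Sset n (fun _ => 0)) (shf y).
    apply: IH => //.
    + by move=> i hi; apply: hy.
    + move=> k hk; apply: (@le_trans _ _ 0).
        rewrite /cut big1 // => i _; rewrite /ir mulr0 //.
      apply: cut_ge0 => // i hi; apply: hy; rewrite /shf; lia.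
  have hmono : forall a, yb 0%N < a -> forall p,
      Sset n (fun _ => 0) (shf p) /\ p 0%N = a -> Sset n.+1 yb p.
    move=> a ha p [[hp1 hp2] hp0]; split.
      case=> [|i] hi; first by rewrite hp0; apply: le_trans (hyb 0%N) (ltW ha).
      by apply: hp1.
    by right; exists 0%N; split => //; rewrite hp0.
  apply: (@conv_comb _ _ ((f + 1)%:~R - y 0%N)
     (fun i => if i is j.+1 then y j.+1 else f%:~R)
     (fun i => if i is j.+1 then y j.+1 else (f + 1)%:~R)).
  + rewrite intrD in fu *; apply/andP; split; lra.
  + apply: conv_mono (hmono f ltf) _.
    by apply: (@conv_cons _ _ _ (shf y)).
  + apply: conv_mono (hmono (f + 1) _) _; first by apply: lt_le_trans ltf _; rewrite lerDl.
    by apply: (@conv_cons _ _ _ (shf y)).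
  + case=> [|i] hi /=; last by ring.
    rewrite intrD; ring.
- have ef : f = yb 0%N by apply/eqP; rewrite eq_le gef ybf.
  rewrite ef in fl fu.
  set th := y 0%N - (yb 0%N)%:~R.
  have hs : 0 < 1 - th by rewrite intrD in fu; rewrite /th; lra.
  set b := fun i => shf y i / (1 - th).
  have IHb : convP n (Sset n (shf yb)) b.
    apply: IH.
    + by move=> j; apply: hyb.
    + by move=> i hi; apply: divr_ge0; [apply: hy | apply: ltW].
    + move=> k hk.
      have := hc k.+1 hk; rewrite !cut_shift D0_cut.
      set beta := cut _ _ (shf (ir yb)); set C := cut _ _ (shf y) => h.
      rewrite /b cut_div ler_pdivlMr //.
      change (cut (shf yb) k (ir (shf yb))) with beta.
      rewrite /th; move: h; rewrite /ir /C => h; rewrite !mulrBr mulr1; lra.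
  apply: (@conv_comb _ _ th
     (fun i => if i is j.+1 then 0 else (yb 0%N + 1)%:~R)
     (fun i => if i is j.+1 then b j else (yb 0%N)%:~R)).
  + rewrite /th; rewrite intrD in fu; apply/andP; split; lra.
  + apply: (@conv_pt _ _ (fun i => if i is j.+1 then 0 else yb 0%N + 1)); last first.
      by case.
    split.
      case=> [|i] hi //; apply: addr_ge0 => //; exact: hyb.
    by right; exists 0%N; split => //; rewrite ltzD1.
  + apply: conv_mono (@conv_cons _ _ (yb 0%N) _ _ IHb _ _) => //.
    move=> p [[hp1 hp2] hp0]; split.
      by case=> [|i] hi; [rewrite hp0; apply: hyb | apply: hp1].
    case: hp2 => [h|[l [hl hpre hlt]]].
      by left; case=> [|i] hi //; apply: h.
    by right; exists l.+1; split => //; case=> [|i] hi //; apply: hpre.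
  + case=> [|i] hi /=.
      rewrite intrD /th; ring.
    rewrite /b /shf mulr0 add0r mulrCA divff ?mulr1 //.
    by rewrite gt_eqF.
Qed.

End Abs.

From Stdlib Require Import FunctionalExtensionality.

Section Bridge.
Variable R : realType.
Variable N : nat.
Variable c : 'I_N.+1 -> 'I_N.+1 -> int.

Definition yz (z : 'I_N.+1 -> int) : nat -> int :=
  fun i => if (i < N.+1)%N then \sum_j c (inord i) j * z j else 0.

Lemma cdot_int (z : 'I_N.+1 -> int) i :
  cdot c (intvec R z) i = (\sum_j c i j * z j)%:~R.
Proof. by rewrite /cdot rmorph_sum; apply: eq_bigr => j _; rewrite rmorphM. Qed.

Lemma yz_val z (i : 'I_N.+1) : yz z i = \sum_j c i j * z j.
Proof. by rewrite /yz ltn_ord inord_val. Qed.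

Lemma yzR z (i : 'I_N.+1) : (yz z i)%:~R = cdot c (intvec R z) i.
Proof. by rewrite yz_val cdot_int. Qed.

Lemma conv1 (xbar : 'I_N.+1 -> int) (k : 'I_N.+1) (x' : 'I_N.+1 -> R) (yv : nat -> R) :
  (forall i : 'I_N.+1, yv i = cdot c x' i) ->
  lexcut_lhs c (intvec R xbar) k x' = cut R (yz xbar) k yv.
Proof.
move=> hyv; rewrite /lexcut_lhs /cut (big_nat_widen 0 k.+1 N.+1) ?ltn_ord // big_mkord.
apply: eq_big => [i|i hi]; first by rewrite andTb ltnS.
rewrite hyv; congr (_ * _).
rewrite /dcoef /D.
have -> : (i == k) = (val i == val k) by [].
case: ifP => // _.
rewrite -yzR.
case: ifP => [/eqP hik|_].
  by rewrite big_geq ?mulr1 // -hik.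
congr (_ * _).
rewrite (@big_nat_widenl _ _ _ i.+1 0) // (@big_nat_widen _ _ _ 0 k N.+1); last by apply: ltnW.
rewrite big_mkord; apply: eq_big => [j|j _] //.
by rewrite yzR.
Qed.

End Bridge.

Lemma cdot_lin (R : realType) N (c : 'I_N -> 'I_N -> int) m (w : 'I_m -> R) p x :
  (forall j, x j = \sum_(t < m) w t * p t j) ->
  forall i, cdot c x i = \sum_(t < m) w t * cdot c (p t) i.
Proof.
move=> hx i; rewrite /cdot.
under eq_bigr do rewrite hx mulr_sumr.
rewrite exchange_big; apply: eq_bigr => t _; rewrite mulr_sumr.
by apply: eq_bigr => j _; rewrite mulrCA.
Qed.

Lemma lexcut_lin (R : realType) N (c : 'I_N -> 'I_N -> int) xb k m (w : 'I_m -> R) p x :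
  (forall i, cdot c x i = \sum_(t < m) w t * cdot c (p t) i) ->
  lexcut_lhs c xb k x = \sum_(t < m) w t * lexcut_lhs c xb k (p t).
Proof.
move=> hx; rewrite /lexcut_lhs.
under eq_bigr do rewrite hx mulr_sumr.
rewrite exchange_big; apply: eq_bigr => t _; rewrite mulr_sumr.
by apply: eq_bigr => j _; rewrite mulrCA.
Qed.

Theorem proposition1 (R : realType) (n : nat) (c : 'I_n -> 'I_n -> int)
  (xbar : 'I_n -> int) :
  lattice_basis R c ->
  inK c (intvec R xbar) ->
  (exists j, xbar j != 0) ->
  forall x : 'I_n -> R,
    Qset c (intvec R xbar) x <->
    (forall i, 0 <= cdot c x i) /\
    (forall k : 'I_n, lexcut_lhs c (intvec R xbar) k x >=
                      lexcut_lhs c (intvec R xbar) k (intvec R xbar)).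
Proof.
case: n c xbar => [|N] c xbar hL hK [j0 _] x; first by case: j0.
set yb := yz N c xbar.
have hyb : forall j, 0 <= yb j.
  move=> j; rewrite /yb /yz; case: ifP => // hj.
  have := hK (inord j); by rewrite /inK cdot_int ler0z.
have ybR : forall i : 'I_N.+1, (yb i)%:~R = cdot c (intvec R xbar) i.
  by move=> i; rewrite /yb yzR.
split.
- move=> [m [w [p [hw [hs [hS hx]]]]]].
  have hlin := @cdot_lin _ _ c _ _ _ _ hx.
  split.
    move=> i; rewrite hlin; apply: sumr_ge0 => t _; apply: mulr_ge0 => //.
    by case: (hS t) => h _; apply: h.
  move=> k; rewrite (@lexcut_lin _ _ c _ k _ _ _ _ hlin).
  rewrite -[X in X <= _]mul1r -hs mulr_suml; apply: ler_sum => t _.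
  apply: ler_wpM2l => //.
  case: (hS t) => hKt [[z hz] hlex].
  have ep : p t = intvec R z by apply: functional_extensionality.
  rewrite ep in hKt hlex *.
  rewrite (@conv1 R N c xbar k _ (ir R yb)) // (@conv1 R N c xbar k _ (ir R (yz N c z))); last first.
    by move=> i; rewrite /ir yzR.
  apply: (@valid R k N.+1) => //.
  + move=> i hi; have := hKt (inord i); rewrite -yzR ler0z inordK //.
  + case: hlex => [he|[_ [i [hpre hlt]]]].
      left => i hi; apply/eqP; rewrite -(eqr_int R) -(inordK hi) !yzR.
      by apply/eqP; rewrite /cdot; apply: eq_bigr => j _; rewrite he.
    right; exists i; split => //.
      move=> i' hi'; apply/eqP; rewrite -(eqr_int R).
      have hi'N : (i' < N.+1)%N by apply: ltn_trans hi' (ltn_ord i).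
      rewrite -(inordK hi'N) !yzR. by rewrite hpre ?inordK.
    by rewrite -(ltr_int R) !yzR.
- move=> [hnn hcut].
  pose yv := fun i : nat => if (i < N.+1)%N then cdot c x (inord i) else 0.
  have hyv : forall i : 'I_N.+1, yv i = cdot c x i.
    by move=> i; rewrite /yv ltn_ord inord_val.
  have := @main_abs R N.+1 yb yv hyb.
  case.
  + by move=> i hi; rewrite /yv hi.
  + move=> k hk.
    rewrite -[k](inordK hk) -(@conv1 R N c xbar (inord k) (intvec R xbar) (ir R yb)) //.
    by rewrite -(@conv1 R N c xbar (inord k) x yv).
  move=> m [w [p [hw hs hS hy]]].
  have [L hLC] : exists L : 'I_N.+1 -> 'I_N.+1 -> int,
      forall j k, ((j == k)%:R : int) = \sum_i L j i * c i k.
    have hex : forall j : 'I_N.+1, exists lam : 'I_N.+1 -> int,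
        forall k, ((j == k)%:R : int) = \sum_i lam i * c i k.
      move=> j; have [lam hlam] := hL.2 (fun k : 'I_N.+1 => ((j == k)%:R : int)).
      by exists lam.
    have [L hL'] := fin_all_exists hex.
    by exists L.
  have hCL : forall i k, \sum_j c i j * L j k = ((i == k)%:R : int).
    pose Lm := \matrix_(j, i) L j i; pose Cm := \matrix_(i, k) c i k.
    have h1 : Lm *m Cm = 1%:M.
      by apply/matrixP => j k; rewrite !mxE hLC; apply: eq_bigr => i _; rewrite !mxE.
    have h2 := mulmx1C h1.
    move=> i k; have := congr1 (fun M : 'M[int]_N.+1 => M i k) h2; rewrite !mxE => <-.
    by apply: eq_bigr => j _; rewrite !mxE.
  pose qz := fun t j => \sum_(i < N.+1) L j i * p t i.
  have hq : forall t i, cdot c (intvec R (qz t)) i = (p t i)%:~R.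
    move=> t i; rewrite cdot_int; congr (_%:~R).
    rewrite /qz; under eq_bigr do rewrite mulr_sumr.
    rewrite exchange_big /=.
    rewrite (eq_bigr (fun j => ((i == j)%:R : int) * p t j)); last first.
      by move=> j _; rewrite -hCL mulr_suml; apply: eq_bigr => k _; rewrite mulrA.
    rewrite (bigD1 i) //= eqxx mul1r big1 ?addr0 // => k /negbTE hk.
    by rewrite eq_sym hk mul0r.
  have hLinv : forall (z : 'I_N.+1 -> R) j,
      z j = \sum_k (L j k)%:~R * cdot c z k.
    move=> z j; rewrite /cdot.
    under eq_bigr do rewrite mulr_sumr.
    rewrite exchange_big /=.
    rewrite (eq_bigr (fun k => (((j == k)%:R : int))%:~R * z k)); last first.
      move=> k _; rewrite hLC rmorph_sum mulr_suml; apply: eq_bigr => i _.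
      by rewrite rmorphM mulrA.
    rewrite (bigD1 j) //= eqxx mul1r big1 ?addr0 // => k /negbTE hk.
    by rewrite eq_sym hk mul0r.
  exists m, w, (fun t => intvec R (qz t)); split => //; split => //; split.
  + move=> t; case: (hS t) => hnt hlt; split.
      by move=> i; rewrite hq ler0z; apply: hnt.
    split; first by exists (qz t).
    case: hlt => [heq|[l [hl hpre hlt]]].
      left => j; rewrite (hLinv (intvec R (qz t))) (hLinv (intvec R xbar)).
      by apply: eq_bigr => k _; rewrite hq -ybR heq.
    right; split.
      case: (boolP [exists j, intvec R xbar j != intvec R (qz t) j]).
        by move=> /existsP[j /eqP hj]; exists j.
      move=> /existsPn hall; exfalso.
      have : cdot c (intvec R xbar) (inord l) = cdot c (intvec R (qz t)) (inord l).
        by apply: eq_bigr => j _; have := hall j; rewrite negbK => /eqP ->.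
      rewrite hq -ybR inordK // => /eqP; rewrite eqr_int => /eqP e.
      by rewrite e ltxx in hlt.
    exists (inord l); split.
      move=> i' hi'; rewrite hq -ybR hpre //.
      by move: hi'; rewrite inordK.
    by rewrite hq -ybR inordK // ltr_int.
  + move=> j; rewrite (hLinv x j).
    under eq_bigr do rewrite -hyv hy ?ltn_ord // mulr_sumr.
    rewrite exchange_big; apply: eq_bigr => t _.
    rewrite /intvec /qz rmorph_sum mulr_sumr; apply: eq_bigr => k _.
    by rewrite rmorphM mulrCA.
Qed.
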